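(* Every nonempty relatively weakly open subset of the closed unit ball of Read's space $\mathcal R=(c_0,|||\cdot|||)$ has $|||\cdot|||$-diameter greater than or equal to $2/3$.
   Context: Let $c_{00}(\mathbb Q)$ be the set of finitely supported sequences with rational coefficients, and let $(u_n)_{n\in\mathbb N}$ be a sequence in $c_{00}(\mathbb Q)$ which lists every element of $c_{00}(\mathbb Q)$ infinitely many times. Let $(a_n)_{n\in\mathbb N}$ be a strictly increasing sequence of positive integers with $a_n>\max\operatorname{supp} u_n$ and $a_n>\|u_n\|_1$ for every $n$. $(e_n)$ denotes the canonical unit vectors and $\langle x,y\rangle=\sum_n x_ny_n$. Read's norm on $c_0$ is $|||x||| = \|x\|_\infty + \sum_{n} 2^{-a_n^2}|\langle x, u_n - e_{a_n}\rangle|$, and Read's space is $\mathcal R=(c_0,|||\cdot|||)$ (real scalars). *)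

(* Defs.v *)
From HB Require Import structures.
From mathcomp Require Import all_boot all_order all_algebra.
From mathcomp Require Import all_classical all_reals all_analysis.
Set Implicit Arguments. Unset Strict Implicit. Unset Printing Implicit Defensive.
Import Order.TTheory GRing.Theory Num.Theory.
Local Open Scope ring_scope.
Local Open Scope classical_set_scope.

Definition rseries {R : realType} (f : nat -> R) : R :=
  limn (fun n => \sum_(k < n) f k).

Definition finsupp (v : nat -> rat) : Prop :=
  exists N, forall k, (N <= k)%N -> v k = 0.

Definition c0 {R : realType} (x : nat -> R) : Prop := x @ \oo --> 0.

Definition pairing {R : realType} (x y : nat -> R) : R :=
  rseries (fun k => x k * y k).

Definition supnorm {R : realType} (x : nat -> R) : R :=
  sup (range (fun k => `|x k|)).

Definition unitvec {R : realType} (m : nat) : nat -> R :=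
  fun k => (k == m)%:R.

Definition read_norm {R : realType} (u : nat -> nat -> rat) (a : nat -> nat)
    (x : nat -> R) : R :=
  supnorm x + rseries (fun n =>
     (2 : R) ^- ((a n) ^ 2)%N *
     `| pairing x (fun k => ratr (u n k) - unitvec (a n) k) |).

Definition read_data (u : nat -> nat -> rat) (a : nat -> nat) : Prop :=
  [/\ (forall n, finsupp (u n)),
      (* every element of c_00(Q) is listed infinitely many times *)
      (forall v, finsupp v -> forall N, exists2 n, (N <= n)%N & u n = v),
      (forall m n, (m < n)%N -> (a m < a n)%N) /\ (forall n, (0 < a n)%N),
      (forall n k, u n k != 0 -> (k < a n)%N)
    & (* a_n > ||u_n||_1  (the support of u_n lies in [0, a_n)) *)
      (forall n, \sum_(k < a n) `|u n k| < (a n)%:R)].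

(* continuous (= bounded) linear functionals on (c_0, |||.|||) *)
Definition read_dual {R : realType} (u : nat -> nat -> rat) (a : nat -> nat)
    (f : (nat -> R) -> R) : Prop :=
  (forall (c : R) x y, c0 x -> c0 y ->
      f (fun k => c * x k + y k) = c * f x + f y) /\
  exists C : R, forall x, c0 x -> `|f x| <= C * read_norm u a x.

Definition read_ball {R : realType} (u : nat -> nat -> rat) (a : nat -> nat) :
    set (nat -> R) :=
  [set x | c0 x /\ read_norm u a x <= 1].

Definition rel_weakly_open_in_ball {R : realType} (u : nat -> nat -> rat)
    (a : nat -> nat) (W : set (nat -> R)) : Prop :=
  W `<=` read_ball u a /\
  forall x, W x -> exists (m : nat) (fs : 'I_m -> (nat -> R) -> R) (e : R),
    [/\ 0 < e, (forall i, read_dual u a (fs i)) &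
        forall y, read_ball u a y ->
          (forall i, `|fs i y - fs i x| < e) -> W y].

Definition read_diam {R : realType} (u : nat -> nat -> rat) (a : nat -> nat)
    (W : set (nat -> R)) : R :=
  sup [set d | exists x y, [/\ W x, W y & d = read_norm u a (fun k => x k - y k)]].

(* Main.v *)
Require Import Defs.
From HB Require Import structures.
From mathcomp Require Import all_boot all_order all_algebra.
From mathcomp Require Import all_classical all_reals all_analysis.
From mathcomp Require Import zify ring lra.
Import Order.TTheory GRing.Theory Num.Theory.
Local Open Scope ring_scope.
Local Open Scope classical_set_scope.

Section S.
Variable R : realType.

Lemma rseries_fin (f : nat -> R) K : (forall k, (K <= k)%N -> f k = 0) ->
  rseries f = \sum_(k < K) f k.
Proof.
move=> fK; rewrite /rseries.
have H : (fun n => \sum_(k < n) f k) @ \oo --> \sum_(k < K) f k.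
  apply: cvg_near_cst. near=> n.
have Kn : (K <= n)%N by near: n; exists K.
rewrite -(subnKC Kn) big_split_ord /= [X in _ + X]big1 ?addr0 // => i _.
by apply: fK; rewrite leq_addr.
exact: cvg_lim H.
Unshelve. all: by end_near. Qed.

Lemma rseries_pos (f : nat -> R) B : (forall n, 0 <= f n) ->
  (forall K, \sum_(k < K) f k <= B) ->
  [/\ (forall K, \sum_(k < K) f k <= rseries f), 0 <= rseries f & rseries f <= B].
Proof.
move=> f0 fB.
have nd : nondecreasing_seq (fun n => \sum_(k < n) f k).
  apply/nondecreasing_seqP => n; rewrite big_ord_recr /= lerDl //.
have cv : cvgn (fun n => \sum_(k < n) f k).
  apply: nondecreasing_is_cvgn => //; exists B => _ [n _ <-]; exact: fB.
have h1 : forall K, \sum_(k < K) f k <= rseries f.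
  by move=> K; apply: nondecreasing_cvgn_le.
split => //.
  by apply: le_trans (h1 0%N); rewrite big_ord0.
rewrite /rseries; apply: limr_le => //; near=> n; exact: fB.
Unshelve. all: by end_near. Qed.

Lemma supnorm_ub (x : nat -> R) B : (forall k, `|x k| <= B) -> supnorm x <= B.
Proof.
move=> xB; apply: ge_sup; first by exists `|x 0%N|, 0%N.
by move=> _ [k _ <-]; exact: xB.
Qed.

Lemma supnorm_lb (x : nat -> R) B : (forall k, `|x k| <= B) -> forall k, `|x k| <= supnorm x.
Proof.
move=> xB k; apply: ub_le_sup; last by exists k.
by exists B => _ [j _ <-]; exact: xB.
Qed.

Lemma c0_eventually (x : nat -> R) e : c0 x -> 0 < e -> exists N, forall k, (N <= k)%N -> `|x k| <= e.
Proof.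
move=> cx e0.
have := cvgr0_norm_le x cx e e0.
move=> [N _ HN]; exists N => k Nk; exact: HN.
Qed.

Lemma c0_bounded (x : nat -> R) : c0 x -> exists B, forall k, `|x k| <= B.
Proof.
move=> cx; have [N HN] := @c0_eventually x 1 cx ltr01.
exists (1 + \sum_(j < N) `|x j|) => k.
have [kN|Nk] := ltnP k N.
  rewrite (bigD1 (Ordinal kN)) //= addrCA lerDl addr_ge0 //.
  by rewrite sumr_ge0.
apply: le_trans (HN _ Nk) _; rewrite lerDl sumr_ge0 //.
Qed.
End S.

Section G.
Variable R : realType.

Lemma c0_comb (c d : R) (x y : nat -> R) : c0 x -> c0 y -> c0 (fun k => c * x k + d * y k).
Proof.
move=> cx cy; rewrite /c0.
have := cvgD (cvgMr (a := c) cx) (cvgMr (a := d) cy).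
by rewrite !mulr0 addr0; apply; apply: filter_on_Filter.
Qed.

Lemma c0_ev (x : nat -> R) K : (forall k, (K <= k)%N -> x k = 0) -> c0 x.
Proof.
move=> xK.
rewrite /c0. 
apply: (@cvg_near_cst _ _ 0 x \oo _).
by exists K => // k /= Kk; apply: xK.
Qed.

Lemma c0_unit m : c0 (@unitvec R m).
Proof. by apply: (@c0_ev _ m.+1) => k mk; rewrite /unitvec gtn_eqF. Qed.

Lemma dual0 u a (f : (nat -> R) -> R) : read_dual u a f -> f (fun _ => 0) = 0.
Proof.
move=> [fl _].
have c00 : c0 (fun _ : nat => (0 : R)) by apply: (@c0_ev _ 0).
have := fl 1 _ _ c00 c00.
have -> : (fun k : nat => 1 * (0 : R) + 0) = (fun _ => 0).
  by apply: boolp.funext => k; rewrite mul1r addr0.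
rewrite mul1r => H; apply: (@addrI _ (f (fun _ => 0))).
by rewrite addr0 -H.
Qed.

Lemma dual_comb u a (f : (nat -> R) -> R) (c d : R) x y : read_dual u a f -> c0 x -> c0 y ->
  f (fun k => c * x k + d * y k) = c * f x + d * f y.
Proof.
move=> fd cx cy; have [fl _] := fd.
have e1 : (fun k => d * y k) = (fun k => d * y k + 0 * y k).
  by apply: boolp.funext => k; rewrite mul0r addr0.
have cdy : c0 (fun k => d * y k) by rewrite e1; apply: c0_comb.
rewrite (fl c x _ cx cdy).
have := fl d y (fun _ => 0) cy (@c0_ev _ 0 (fun _ _ => erefl)).
rewrite (dual0 _ _ _ fd) addr0.
have -> : (fun k => d * y k + 0) = (fun k => d * y k).
  by apply: boolp.funext => k; rewrite addr0.
by move=> ->.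
Qed.

Lemma dual_sum u a (f : (nat -> R) -> R) (I : Type) (s : seq I) (d : I -> R) (g : I -> nat -> R) :
  read_dual u a f -> (forall j, c0 (g j)) ->
  c0 (fun k => \sum_(j <- s) d j * g j k) /\
  f (fun k => \sum_(j <- s) d j * g j k) = \sum_(j <- s) d j * f (g j).
Proof.
move=> fd gc; elim: s => [|j s [IHc IHf]].
  have -> : (fun k => \sum_(j <- [::]) d j * g j k) = (fun _ => 0).
    by apply: boolp.funext => k; rewrite big_nil.
  by rewrite big_nil (dual0 _ _ _ fd); split => //; apply: (@c0_ev _ 0).
have -> : (fun k => \sum_(i <- j :: s) d i * g i k) =
          (fun k => d j * g j k + 1 * \sum_(i <- s) d i * g i k).
  by apply: boolp.funext => k; rewrite big_cons mul1r.
split; first by apply: c0_comb.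
by rewrite (dual_comb _ _ _ _ _ _ _ fd) // IHf big_cons mul1r.
Qed.

End G.

Lemma kernel_vec (R : realType) m (A : 'M[R]_(m.+1, m)) :
  exists c : 'rV[R]_(m.+1), c != 0 /\ c *m A = 0.
Proof.
set K := kermx A.
have rK : (0 < \rank K)%N.
  by rewrite /K mxrank_ker subn_gt0 ltnS rank_leq_col.
have : K != 0 by rewrite -mxrank_eq0 -lt0n.
case: (pickP (fun i => row i K != 0)) => [i Hi _|H].
  exists (row i K); split => //.
  by rewrite -row_mul mulmx_ker row0.
move=> /negP; case; apply/eqP/row_matrixP => i.
by move: (H i) => /negbFE/eqP ->; rewrite row0.
Qed.

Lemma nat_ineq a : (a.+1 * (2 ^ a * 2 ^ a) <= 4 * 2 ^ (a * a))%N.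
Proof.
have h1 : (a.+1 <= 2 ^ a)%N by exact: ltn_expl.
apply: (@leq_trans (2 ^ a * (2 ^ a * 2 ^ a))); first by rewrite leq_mul2r h1 orbT.
rewrite -!expnD (_ : 4 = 2 ^ 2)%N // -expnD leq_exp2l //.
by case: a h1 => [|[|[|a]]] // _; nia.
Qed.

Section Read.
Variable R : realType.
Variables (u : nat -> nat -> rat) (a : nat -> nat).
Hypothesis hd : read_data u a.

Definition vn n k : R := ratr (u n k) - unitvec (a n) k.
Definition Tn n (w : nat -> R) : R :=
  (2 : R) ^- ((a n) ^ 2)%N * `| pairing w (fun k => ratr (u n k) - unitvec (a n) k) |.
Definition h : R := 2^-1.

Lemma read_normE w : read_norm u a w = supnorm w + rseries (fun n => Tn n w).
Proof. by []. Qed.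

Lemma u_zero n k : (a n <= k)%N -> u n k = 0.
Proof.
case: hd => _ _ _ Hs _ ank; have := Hs n k.
by case: (u n k =P 0) => // _ /(_ isT); rewrite ltnNge ank.
Qed.

Lemma vn_zero n k : (a n < k)%N -> vn n k = 0.
Proof.
move=> ank; rewrite /vn u_zero ?(ltnW ank) // rmorph0 /unitvec gtn_eqF //.
by rewrite subr0.
Qed.

Lemma P_fin n (w : nat -> R) :
  pairing w (fun k => ratr (u n k) - unitvec (a n) k) = \sum_(k < (a n).+1) w k * vn n k.
Proof.
rewrite /pairing (@rseries_fin R _ (a n).+1) // => k ank.
by rewrite -/(vn n k) vn_zero ?mulr0.
Qed.

Lemma sum_vn n : \sum_(k < (a n).+1) `|vn n k| <= (a n).+1%:R.
Proof.
case: hd => _ _ _ _ Hl.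
rewrite big_ord_recr /= /vn u_zero // rmorph0 /unitvec eqxx sub0r normrN normr1.
rewrite -natr1 lerD2r.
have -> : \sum_(i < a n) `|ratr (u n i) - ((i == a n :> nat)%:R : R)| =
          ratr (\sum_(i < a n) `|u n i|).
  rewrite rmorph_sum; apply: eq_bigr => i _.
  by rewrite ltn_eqF // subr0; symmetry; apply: ratr_norm.
have := ltW (Hl n); rewrite -(ler_rat R) => /le_trans; apply.
by rewrite ratr_nat.
Qed.

Lemma P_bound n (w : nat -> R) (B : R) : 0 <= B -> (forall k, `|w k| <= B) ->
  `|pairing w (fun k => ratr (u n k) - unitvec (a n) k)| <= B * (a n).+1%:R.
Proof.
move=> B0 wB; rewrite P_fin.
apply: le_trans (ler_norm_sum _ _ _) _.
apply: le_trans (_ : \sum_(k < (a n).+1) B * `|vn n k| <= _).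
  by apply: ler_sum => k _; rewrite normrM ler_wpM2r.
by rewrite -mulr_sumr ler_wpM2l // sum_vn.
Qed.

Lemma P_vanish n (w : nat -> R) N : (forall k, (k < N)%N -> w k = 0) -> (a n < N)%N ->
  pairing w (fun k => ratr (u n k) - unitvec (a n) k) = 0.
Proof.
move=> w0 anN; rewrite P_fin big1 // => k _.
by rewrite w0 ?mul0r // (leq_ltn_trans _ anN) // -ltnS.
Qed.

Lemma coef_le (m : nat) : (2 : R) ^- (m ^ 2)%N * m.+1%:R <= 4 * (h ^+ m * h ^+ m).
Proof.
have := nat_ineq m; rewrite -(ler_nat R) !natrM !natrX => H.
rewrite /h !exprVn -invfM.
have X0 : (0 : R) < 2 ^+ m * 2 ^+ m by rewrite mulr_gt0 // exprn_gt0.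
have Y0 : (0 : R) < 2 ^+ (m ^ 2)%N by rewrite exprn_gt0.
rewrite (mulrC _ m.+1%:R) ler_pdivrMr // mulrAC ler_pdivlMr //.
Qed.

Lemma Tn_ge0 n w : 0 <= Tn n w.
Proof. by rewrite /Tn mulr_ge0 // invr_ge0 exprn_ge0. Qed.

Lemma TB n (w : nat -> R) (B : R) : 0 <= B -> (forall k, `|w k| <= B) ->
  Tn n w <= 4 * B * (h ^+ (a n) * h ^+ (a n)).
Proof.
move=> B0 wB; rewrite /Tn.
apply: le_trans (_ : (2 : R) ^- ((a n) ^ 2)%N * (B * (a n).+1%:R) <= _).
  by rewrite ler_wpM2l ?invr_ge0 ?exprn_ge0 // P_bound.
rewrite mulrCA (mulrC 4) -mulrA ler_wpM2l //.
exact: coef_le.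
Qed.

Lemma a_ge n : (n.+1 <= a n)%N.
Proof.
case: hd => _ _ [Hi Hp] _ _.
elim: n => [|n IH]; first exact: Hp.
by apply: leq_ltn_trans IH _; apply: Hi.
Qed.

Lemma h_ge0 : 0 <= h. Proof. by rewrite /h invr_ge0. Qed.
Lemma h_le1 : h <= 1. Proof. by rewrite /h invf_le1 // ler1n. Qed.

Lemma hX_le m n : (n <= m)%N -> h ^+ m <= h ^+ n.
Proof. by move=> nm; apply: ler_wiXn2l; [exact: h_ge0|exact: h_le1|]. Qed.

Lemma G1 K : \sum_(n < K) h ^+ n.+1 = 1 - h ^+ K.
Proof.
elim: K => [|K IH]; first by rewrite big_ord0 expr0 subrr.
rewrite big_ord_recr /= IH !exprS /h; lra.
Qed.

Lemma G2 K : \sum_(n < K) (h ^+ n.+1 * h ^+ n.+1) = (1 - h ^+ K * h ^+ K) / 3.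
Proof.
elim: K => [|K IH]; first by rewrite big_ord0 expr0 mulr1 subrr mul0r.
rewrite big_ord_recr /= IH !exprS /h; lra.
Qed.

Lemma SB (w : nat -> R) (B : R) : 0 <= B -> (forall k, `|w k| <= B) ->
  forall K, \sum_(n < K) Tn n w <= 4 * B / 3.
Proof.
move=> B0 wB K.
apply: le_trans (_ : \sum_(n < K) 4 * B * (h ^+ n.+1 * h ^+ n.+1) <= _).
  apply: ler_sum => n _; apply: le_trans (TB n w B B0 wB) _.
  rewrite ler_wpM2l ?mulr_ge0 //.
  have := hX_le _ _ (a_ge n) => H.
  by apply: ler_pM => //; apply: exprn_ge0; apply: h_ge0.
rewrite -mulr_sumr G2 mulrA ler_pM2r ?invr_gt0 // ler_piMr ?mulr_ge0 //.
rewrite lerBlDr lerDl; apply: mulr_ge0; apply: exprn_ge0; apply: h_ge0.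
Qed.

Lemma SZ (w : nat -> R) (B : R) N : 0 <= B -> (forall k, `|w k| <= B) ->
  (forall k, (k < N)%N -> w k = 0) ->
  forall K, \sum_(n < K) Tn n w <= 4 * B * h ^+ N.
Proof.
move=> B0 wB w0 K.
have hN0 : 0 <= h ^+ N by apply: exprn_ge0; apply: h_ge0.
apply: le_trans (_ : \sum_(n < K) 4 * B * h ^+ N * h ^+ n.+1 <= _).
  apply: ler_sum => n _.
  have [anN|Nan] := ltnP (a n) N.
    rewrite /Tn (P_vanish n w N w0 anN) normr0 mulr0.
    by rewrite !mulr_ge0 //; apply: exprn_ge0; apply: h_ge0.
  apply: le_trans (TB n w B B0 wB) _.
  rewrite -[X in _ <= X]mulrA ler_wpM2l ?mulr_ge0 //.
  by apply: ler_pM; rewrite ?exprn_ge0 ?h_ge0 //; apply: hX_le => //; apply: a_ge.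
rewrite -mulr_sumr G1 ler_piMr ?mulr_ge0 //.
rewrite lerBlDr lerDl; apply: exprn_ge0; apply: h_ge0.
Qed.

Lemma S_props (w : nat -> R) (B : R) : (forall K, \sum_(n < K) Tn n w <= B) ->
  [/\ (forall K, \sum_(n < K) Tn n w <= rseries (fun n => Tn n w)),
      0 <= rseries (fun n => Tn n w) & rseries (fun n => Tn n w) <= B].
Proof. by move=> HB; apply: rseries_pos => // n; apply: Tn_ge0. Qed.

Lemma P_lin n (x z : nat -> R) c d :
  pairing (fun k => c * x k + d * z k) (fun k => ratr (u n k) - unitvec (a n) k) =
  c * pairing x (fun k => ratr (u n k) - unitvec (a n) k) +
  d * pairing z (fun k => ratr (u n k) - unitvec (a n) k).
Proof.
rewrite !P_fin !mulr_sumr -big_split /=; apply: eq_bigr => k _.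
by rewrite mulrDl !mulrA.
Qed.

Lemma T_lin n (x z : nat -> R) c d : 0 <= c ->
  Tn n (fun k => c * x k + d * z k) <= c * Tn n x + `|d| * Tn n z.
Proof.
move=> c0; rewrite /Tn P_lin mulrCA (mulrCA `|d|) -mulrDr.
rewrite ler_wpM2l ?invr_ge0 ?exprn_ge0 //.
apply: le_trans (ler_normD _ _) _.
by rewrite !normrM (ger0_norm c0).
Qed.

Lemma RN_parts (w : nat -> R) (B : R) : 0 <= B -> (forall k, `|w k| <= B) ->
  (forall k, `|w k| <= read_norm u a w) /\ read_norm u a w <= B + 4 * B / 3.
Proof.
move=> B0 wB; have [_ S0 SB'] := S_props w (4 * B / 3) (SB w B B0 wB).
rewrite read_normE; split.
  by move=> k; apply: le_trans (@supnorm_lb R w B wB k) _; rewrite lerDl.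
by apply: lerD => //; apply: supnorm_ub.
Qed.

Lemma ball_le1 (x : nat -> R) : read_ball u a x -> forall k, `|x k| <= 1.
Proof.
move=> [cx nx]; have [B HB] := @c0_bounded R x cx.
have B0 : 0 <= B by apply: le_trans (HB 0%N).
have [H _] := RN_parts x B B0 HB.
by move=> k; apply: le_trans (H k) nx.
Qed.

Theorem main_thm (W : set (nat -> R)) :
  rel_weakly_open_in_ball u a W -> W !=set0 -> 2 / 3 <= read_diam u a W.
Proof.
move=> [Wsub Wop] [x0 Wx0].
have [cx0 nx0] := Wsub x0 Wx0.
have [B0' HB0'] := @c0_bounded R x0 cx0.
have xM : forall k, `|x0 k| <= supnorm x0 := @supnorm_lb R x0 B0' HB0'.
set M := supnorm x0 in xM.
have M0 : 0 <= M by apply: le_trans (xM 0%N).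
have [Spart S0 S43] := S_props x0 (4 * M / 3) (SB x0 M M0 xM).
set S := rseries (fun n => Tn n x0) in Spart S0 S43.
have MS : M + S <= 1 by exact: nx0.
have [m [fs [e [e0 fsd Hnb]]]] := Wop x0 Wx0.
pose eta : R := 1 / 21.
have eta0 : 0 < eta by rewrite /eta; lra.
pose t : R := 1 - S - 2 * eta.
have t13 : 1 / 3 <= t by rewrite /t /eta; lra.
have t1 : t <= 1 by rewrite /t /eta; lra.
pose C := \sum_(i < m) `|fs i x0|.
have C0 : 0 <= C by apply: sumr_ge0.
have fC : forall i, `|fs i x0| <= C.
  by move=> i; rewrite /C (bigD1 i) //= lerDl sumr_ge0.
pose dl := Num.min eta (e / (C + 1)).
have dl0 : 0 < dl by rewrite lt_min eta0 divr_gt0 // ltr_wpDl.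
have dleta : dl <= eta by rewrite ge_min lexx.
have dle : dl <= e / (C + 1) by rewrite ge_min lexx orbT.
have dfi : forall i, dl * `|fs i x0| < e.
  move=> i; apply: le_lt_trans (_ : e / (C + 1) * C < e).
    by apply: ler_pM => //; apply: ltW.
  rewrite mulrAC ltr_pdivrMr ?ltr_wpDl // ltr_pM2l //; lra.
have [N1 HN1] := @c0_eventually R x0 eta cx0 eta0.
have hc0 : c0 (fun n => h ^+ n).
  by apply: cvg_expr; rewrite ger0_norm ?h_ge0 // /h invf_lt1 // ltr1n.
have [N2 HN2] := @c0_eventually R _ (dl / 4) hc0 (divr_gt0 dl0 (ltr0n _ 4)).
pose N := maxn N1 N2.
pose A : 'M[R]_(m.+1, m) := \matrix_(j, i) fs i (unitvec (N + j)).
have [c [cne cA]] := kernel_vec R m A.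
pose j0 := [arg max_(j > ord0) `|c 0 j|]%O.
have j0max : forall j, `|c 0 j| <= `|c 0 j0|.
  by rewrite /j0; case: arg_maxP => // j _ H k; apply: H.
pose r := `|c 0 j0|.
have r0 : 0 < r.
  rewrite /r normr_gt0; apply: contraNneq cne => cj0.
  by apply/eqP/rowP => j; rewrite mxE; apply/eqP; rewrite -normr_le0; apply: le_trans (j0max j) _; rewrite cj0 normr0.
pose cn := fun j : 'I_m.+1 => c 0 j / r.
pose z := fun k => \sum_(j < m.+1) cn j * unitvec (N + j) k.
have z_lo : forall k, (k < N)%N -> z k = 0.
  move=> k kN; apply: big1 => i _; rewrite /unitvec.
  by rewrite ltn_eqF ?mulr0 // (leq_trans kN) // leq_addr.
have z_hi : forall k, (N + m.+1 <= k)%N -> z k = 0.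
  move=> k kN; apply: big1 => i _; rewrite /unitvec.
  by rewrite gtn_eqF ?mulr0 // (leq_trans _ kN) // ltn_add2l.
have z_at : forall l : 'I_m.+1, z (N + l)%N = cn l.
  move=> l; rewrite /z (bigD1 l) //= big1 ?addr0.
    by rewrite /unitvec eqxx mulr1.
  move=> l' jj'; rewrite /unitvec eqn_add2l.
  have H : (l == l' :> nat) = false by rewrite eq_sym; apply/negbTE.
  by rewrite H mulr0.
have cn1 : forall l, `|cn l| <= 1.
  move=> l; rewrite /cn normrM normfV (ger0_norm (ltW r0)) ler_pdivrMr // mul1r; apply: j0max.
have cnj0 : `|cn j0| = 1 by rewrite /cn normrM normfV (ger0_norm (ltW r0)) divff // gt_eqF.
have z_bd : forall k, `|z k| <= 1.
  move=> k; have [kN|Nk] := ltnP k N; first by rewrite z_lo ?normr0.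
  have [km|mk] := ltnP (k - N) m.+1.
    have -> : k = (N + Ordinal km)%N by rewrite /= subnKC.
    by rewrite z_at.
  by rewrite z_hi ?normr0 // -(subnKC Nk) leq_add2l.
have cz : c0 z by apply: (@c0_ev _ _ (N + m.+1)).
have fz : forall i, fs i z = 0.
  move=> i; have [_ ->] := @dual_sum R u a (fs i) _ (index_enum 'I_m.+1) cn
     (fun l => unitvec (N + l)) (fsd i) (fun l => c0_unit _ _).
  have : (c *m A) 0 i = 0 by rewrite cA mxE.
  rewrite mxE => H.
  rewrite (_ : \sum_(l <- index_enum 'I_m.+1) _ = r^-1 * \sum_l c 0 l * A l i).
    by rewrite H mulr0.
  rewrite mulr_sumr; apply: eq_bigr => l _; rewrite mxE /cn.
  by rewrite mulrA (mulrC _ (c 0 l)).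
have hN : h ^+ N <= dl / 4.
  have := HN2 N (leq_maxr _ _); rewrite ger0_norm //; apply: exprn_ge0; exact: h_ge0.
have dl1 : dl <= 1 by apply: le_trans dleta _; rewrite /eta; lra.
have Ymem : forall s, `|s| = t -> W (fun k => (1 - dl) * x0 k + s * z k).
  move=> s st; apply: Hnb; last first.
    move=> i; rewrite (dual_comb _ _ _ _ _ _ _ _ (fsd i) cx0 cz) fz mulr0 addr0.
    have -> : (1 - dl) * fs i x0 - fs i x0 = - (dl * fs i x0) by ring.
    by rewrite normrN normrM (ger0_norm (ltW dl0)).
  split; first exact: c0_comb.
  pose Y := 1 - (1 - dl) * S - dl.
  have supY : supnorm (fun k => (1 - dl) * x0 k + s * z k) <= Y.
    apply: supnorm_ub => k.
    have [kN|Nk] := ltnP k N.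
      rewrite z_lo // mulr0 addr0 normrM ger0_norm ?subr_ge0 //.
      have : (1 - dl) * `|x0 k| <= (1 - dl) * (1 - S).
        by rewrite ler_wpM2l ?subr_ge0 //; apply: le_trans (xM k) _; lra.
      by move=> H; apply: le_trans H _; rewrite /Y; lra.
    apply: le_trans (ler_normD _ _) _.
    rewrite !normrM st ger0_norm ?subr_ge0 //.
    have H1 : (1 - dl) * `|x0 k| <= eta.
      have := HN1 k (leq_trans (leq_maxl _ _) Nk) => H.
      apply: le_trans (_ : (1 - dl) * eta <= eta); first by rewrite ler_wpM2l ?subr_ge0.
      rewrite mulrBl mul1r; have : 0 <= dl * eta by rewrite mulr_ge0 // ltW.
      lra.
    have H2 : t * `|z k| <= t by rewrite ler_piMr ?z_bd //; lra.
    have H3 : 0 <= dl * S by rewrite mulr_ge0 // ltW.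
    have E : (1 - dl) * S = S - dl * S by ring.
    rewrite /Y E.
    move: H1 H2 H3; set X1 := (1 - dl) * _; set X2 := t * _; set X3 := dl * S.
    rewrite /t; lra.
  have serY : rseries (fun n => Tn n (fun k => (1 - dl) * x0 k + s * z k)) <= (1 - dl) * S + dl.
    suff HS : forall K, \sum_(n < K) Tn n (fun k => (1 - dl) * x0 k + s * z k) <= (1 - dl) * S + dl.
      by case: (S_props _ _ HS).
    move=> K; apply: le_trans (_ : \sum_(n < K) ((1 - dl) * Tn n x0 + `|s| * Tn n z) <= _).
      by apply: ler_sum => n _; apply: T_lin; rewrite subr_ge0.
    rewrite big_split /= -!mulr_sumr st.
    apply: lerD; first by rewrite ler_wpM2l ?subr_ge0 //; apply: Spart.
    have HZ := SZ z 1 N ler01 z_bd z_lo K.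
    apply: le_trans (_ : t * (4 * 1 * h ^+ N) <= _); first by rewrite ler_wpM2l //; lra.
    have h0 : 0 <= h ^+ N by apply: exprn_ge0; exact: h_ge0.
    apply: le_trans (_ : 1 * (4 * 1 * h ^+ N) <= _).
      by rewrite ler_wpM2r // !mulr_ge0.
    rewrite !mul1r; lra.
  rewrite read_normE; apply: le_trans (lerD supY serY) _; rewrite /Y; lra.
have t0 : 0 <= t by lra.
have W1 := Ymem t (ger0_norm t0).
have W2 : W (fun k => (1 - dl) * x0 k + - t * z k) by apply: Ymem; rewrite normrN ger0_norm.
pose w := fun k => ((1 - dl) * x0 k + t * z k) - ((1 - dl) * x0 k + - t * z k).
have wE : forall k, w k = (t + t) * z k by move=> k; rewrite /w; ring.
have wB : forall k, `|w k| <= t + t.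
  move=> k; rewrite wE normrM (ger0_norm (addr_ge0 t0 t0)).
  by rewrite -[X in _ <= X]mulr1 ler_wpM2l ?(addr_ge0 t0 t0) ?z_bd.
have [wlb _] := RN_parts w (t + t) (addr_ge0 t0 t0) wB.
have dge : 2 / 3 <= read_norm u a w.
  apply: le_trans (wlb (N + j0)%N); rewrite wE z_at normrM cnj0 mulr1 (ger0_norm (addr_ge0 t0 t0)).
  lra.
apply: le_trans dge _; apply: ub_le_sup; last first.
  exists (fun k => (1 - dl) * x0 k + t * z k), (fun k => (1 - dl) * x0 k + - t * z k).
  by split.
exists (2 + 4 * 2 / 3) => _ [x [y [Wx Wy ->]]].
have xb := ball_le1 x (Wsub x Wx).
have yb := ball_le1 y (Wsub y Wy).
have xyb : forall k, `|x k - y k| <= 2.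
  by move=> k; apply: le_trans (ler_normB _ _) _; apply: lerD.
by have [_ ->] := RN_parts (fun k => x k - y k) 2 (ler0n R 2) xyb.
Qed.

End Read.

Theorem corollary2p8 (R : realType) (u : nat -> nat -> rat) (a : nat -> nat)
    (W : set (nat -> R)) :
  read_data u a ->
  rel_weakly_open_in_ball u a W ->
  W !=set0 ->
  2 / 3 <= read_diam u a W.
Proof. by move=> hd; apply: main_thm. Qed.
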